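(* Let $P$ be a finite up-regular order and let $R$ be its relatively maximum full trunk (which exists). Then $\mathrm{Height}(P\setminus R)\le \tfrac12\,\mathrm{Height}(P)$, where $P\setminus R$ denotes the induced suborder on $\mathrm{Dom}(P)\setminus R$.
   Context: Orders are partial orders; $x\sim y$ means $x\ne y$ and $x,y$ incomparable. For a finite order $Q$, $\mathrm{Height}(Q)$ is the maximum cardinality of a chain of $Q$ (0 if $Q$ is empty), and $\mathrm{Level}(x)=\sup\{\mathrm{Level}(y)+1:y<x\}$. An element $x$ of $P$ is up-regular if for all $y,z$ with $\mathrm{Level}(x)<\mathrm{Level}(y)=\mathrm{Level}(z)$ we have $x<y\iff x<z$; $P$ is up-regular if all its elements are. A trunk of $P$ is a subset $T$ such that for pairwise distinct $x,y,z\in T$, $x\sim y$ and $y\sim z$ imply $x\sim z$. A chain is maximum if it has maximum cardinality; a full trunk is a trunk containing a maximum chain; the relatively maximum full trunk is the full trunk that is the unique inclusion-maximal full trunk. *)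

(* Defs.v *)
From HB Require Import structures.
From mathcomp Require Import all_boot all_order.
Set Implicit Arguments. Unset Strict Implicit. Unset Printing Implicit Defensive.
Import Order.Theory.
Local Open Scope order_scope.

Section Defs.
Context {d : Order.disp_t} {T : finPOrderType d}.

Definition incomp (x y : T) : bool := (x != y) && ~~ (x >=< y).

Definition is_chain (C : {set T}) : bool :=
  [forall x in C, forall y in C, x >=< y].

(* Height of the induced suborder on A: max cardinality of a chain inside A *)
Definition Height (A : {set T}) : nat :=
  (\max_(C : {set T} | (C \subset A) && is_chain C) #|C|)%N.

(* Level x = sup { Level y + 1 : y < x } (sup of empty set = 0),
   computed by structural recursion with sufficient fuel #|T|. *)
Fixpoint level_fuel (n : nat) (x : T) : nat :=
  match n with
  | 0 => 0
  | n'.+1 => (\max_(y : T | (y < x)%O) (level_fuel n' y).+1)%N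
  end.
Definition Level (x : T) : nat := level_fuel #|T| x.

Definition up_regular_elt (x : T) : Prop :=
  forall y z : T, (Level x < Level y)%N -> Level y = Level z -> (x < y) = (x < z).

Definition up_regular : Prop := forall x : T, up_regular_elt x.

Definition is_trunk (R : {set T}) : Prop :=
  forall x y z : T, x \in R -> y \in R -> z \in R ->
    x != y -> y != z -> x != z ->
    incomp x y -> incomp y z -> incomp x z.

Definition is_max_chain (C : {set T}) : Prop :=
  is_chain C /\ #|C| = Height [set: T].

Definition is_full_trunk (R : {set T}) : Prop :=
  is_trunk R /\ exists C : {set T}, is_max_chain C /\ C \subset R.

Definition is_maximal_full_trunk (R : {set T}) : Prop :=
  is_full_trunk R /\ forall S : {set T}, is_full_trunk S -> R \subset S -> S = R.

Definition is_rel_max_full_trunk (R : {set T}) : Prop :=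
  is_maximal_full_trunk R /\ forall S : {set T}, is_maximal_full_trunk S -> S = R.

End Defs.

(* Main.v *)
Require Import Defs.
From HB Require Import structures.
From mathcomp Require Import all_boot all_order zify.
Import Order.Theory.
Set Implicit Arguments. Unset Strict Implicit. Unset Printing Implicit Defensive.

Section Proofs.
Context {d : Order.disp_t} {T : finPOrderType d}.
Local Notation lf := (@level_fuel d T).

Lemma lf_le n (x : T) : lf n x <= n.
Proof.
elim: n x => [|n IH] x //=.
by apply/bigmax_leqP => y _; exact: IH.
Qed.

Lemma chain1 (x : T) : is_chain [set x].
Proof.
by apply/forallP=> a; apply/implyP=> /set1P->; apply/forallP=> b; apply/implyP=> /set1P->; exact: comparablexx.
Qed.

Lemma lf_chain n (x : T) : exists C : {set T},
  [/\ is_chain C, x \in C, {in C, forall z, (z <= x)%O} & #|C| = (lf n x).+1].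
Proof.
elim: n x => [|n IH] x /=.
  exists [set x]; split; [exact: chain1|by rewrite set11| by move=> z /set1P->|by rewrite cards1].
case: (pickP (fun y => (y < x)%O)) => [y0 Hy0|Hno]; last first.
  rewrite big_pred0 //; exists [set x]; split; [exact: chain1|by rewrite set11| by move=> z /set1P->|by rewrite cards1].
have [|y Hy ->] := @eq_bigmax_cond _ (fun y => (y < x)%O) (fun y => (lf n y).+1).
  by apply/card_gt0P; exists y0.
have [C [Cc yC Cle Ccard]] := IH y.
have xC : x \notin C.
  apply/negP => /Cle xy; by move: (lt_le_trans Hy xy); rewrite ltxx.
exists (x |: C); split.
- apply/forallP => a; apply/implyP => /setU1P aC; apply/forallP => b; apply/implyP => /setU1P bC.
  case: aC => [->|aC]; case: bC => [->|bC].
  + exact: comparablexx.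
  + by rewrite /Order.comparable (le_trans (Cle _ bC) (ltW Hy)) orbT.
  + by rewrite /Order.comparable (le_trans (Cle _ aC) (ltW Hy)).
  + by move/forallP: Cc => /(_ a); rewrite aC /= => /forallP /(_ b); rewrite bC.
- by rewrite setU11.
- move=> z /setU1P [->|zC]; first exact: lexx.
  exact: le_trans (Cle _ zC) (ltW Hy).
- by rewrite cardsU1 xC Ccard.
Qed.

Lemma lf_lt_card n (x : T) : lf n x < #|T|.
Proof.
have [C [_ _ _ <-]] := lf_chain n x.
exact: max_card.
Qed.

Lemma lf_stepD n (x : T) : lf n x != n -> lf n.+1 x <= lf n x.
Proof.
elim: n x => [|n IH] x //=.
move=> Hne; apply/bigmax_leqP => y Hy.
have Hb : (lf n y).+1 <= lf n.+1 x.
  by rewrite /=; exact: (leq_bigmax_cond y Hy).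
case: (eqVneq (lf n y) n) => Hyn.
  have : lf n.+1 x <= n.+1 := lf_le _ _.
  move: Hb Hne; rewrite Hyn /= => Hb Hne Hle.
  by move: Hne; rewrite eqn_leq Hle Hb.
by apply: leq_ltn_trans (IH _ Hyn) _.
Qed.

Lemma lf_mono n (x : T) : lf n x <= lf n.+1 x.
Proof.
elim: n x => [|n IH] x //=.
apply/bigmax_leqP => y Hy.
apply: leq_trans (leq_bigmax_cond y Hy); exact: IH.
Qed.

Lemma Level_fix (x : T) : Level x = \max_(y | (y < x)%O) (Level y).+1.
Proof.
have -> : Level x = lf #|T|.+1 x.
  apply/eqP; rewrite eqn_leq lf_mono lf_stepD //.
  by rewrite neq_ltn lf_lt_card.
by [].
Qed.


Lemma lt_Level (x y : T) : (x < y)%O -> Level x < Level y.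
Proof. by move=> H; rewrite (Level_fix y); exact: (leq_bigmax_cond x H). Qed.

Lemma chain_le_H (C : {set T}) : is_chain C -> #|C| <= Height [set: T].
Proof. by move=> Cc; apply: (leq_bigmax_cond C); rewrite subsetT Cc. Qed.

Lemma Level_lt_H (x : T) : Level x < Height [set: T].
Proof. have [C [Cc _ _ Ccard]] := lf_chain #|T| x; by rewrite -ltnS -[Level x]/(lf #|T| x) -Ccard ltnS chain_le_H. Qed.

Lemma Level_down m (y : T) : Level y <= m -> forall k, k <= Level y ->
  exists z, (z <= y)%O /\ Level z = k.
Proof.
elim: m y => [|m IH] y Hy k Hk.
  exists y; split => //; apply/eqP; by rewrite eqn_leq Hk (leq_trans Hy).
case: (eqVneq k (Level y)) => [->|Hne]; first by exists y.
have Hlt : k < Level y by rewrite ltn_neqAle Hne.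
case: (pickP (fun z => (z < y)%O)) => [y0 Hy0|Hno]; last first.
  by move: Hlt; rewrite Level_fix big_pred0.
have [|z Hz Heq] := @eq_bigmax_cond _ (fun z => (z < y)%O) (fun z => (Level z).+1).
  by apply/card_gt0P; exists y0.
rewrite Level_fix Heq in Hy Hlt.
have [w [wz wk]] := IH z Hy k Hlt.
exists w; split => //; exact: le_trans wz (ltW Hz).
Qed.

Lemma comp_lt (x y : T) : (x >=< y)%O -> Level x < Level y -> (x < y)%O.
Proof.
move=> /comparable_ltgtP [] // H Hl.
  by move: (lt_Level H); rewrite ltnNge ltnW.
by move: Hl; rewrite H ltnn.
Qed.

Lemma chain_comp (C : {set T}) x y : is_chain C -> x \in C -> y \in C -> (x >=< y)%O.
Proof. by move=> /forallP /(_ x) /implyP H xC yC; move: (H xC) => /forallP /(_ y) /implyP; apply. Qed.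

Lemma chain_Level_inj (C : {set T}) x y : is_chain C -> x \in C -> y \in C ->
  Level x = Level y -> x = y.
Proof.
move=> Cc xC yC Hl; move: (chain_comp Cc xC yC) => /comparable_ltgtP [] // H.
  by move: (lt_Level H); rewrite Hl ltnn.
by move: (lt_Level H); rewrite Hl ltnn.
Qed.

Lemma max_chain_ex : exists C : {set T}, is_max_chain C.
Proof.
have [|C HC Heq] := @eq_bigmax_cond _ (fun C : {set T} => (C \subset [set: T]) && is_chain C) (fun C => #|C|).
  apply/card_gt0P; exists set0; rewrite unfold_in /= subsetT /=.
  by apply/forallP => a; rewrite in_set0.
exists C; split; first by case/andP: HC.
by rewrite /Height Heq.
Qed.

Lemma max_chain_cover (C : {set T}) : is_max_chain C ->
  forall k, k < Height [set: T] -> exists2 c, c \in C & Level c = k.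
Proof.
move=> [Cc Ccard] k Hk.
have U : uniq (map Level (enum C)).
  rewrite map_inj_in_uniq ?enum_uniq // => a b aC bC.
  rewrite mem_enum in aC; rewrite mem_enum in bC.
  exact: chain_Level_inj Cc aC bC.
have Sub : {subset map Level (enum C) <= iota 0 (Height [set: T])}.
  move=> n /mapP [c _ ->]; by rewrite mem_iota add0n Level_lt_H.
have Hs : size (iota 0 (Height [set: T])) <= size (map Level (enum C)).
  by rewrite size_map size_iota -cardE Ccard.
have [_ E] := uniq_min_size U Sub Hs.
have : k \in iota 0 (Height [set: T]) by rewrite mem_iota.
rewrite -E => /mapP [c]; rewrite mem_enum => cC ->; by exists c.
Qed.


Definition G := [set x : T | [forall y, (Level x < Level y) ==> (x < y)%O]].

Lemma GP x y : x \in G -> Level x < Level y -> (x < y)%O.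
Proof. by rewrite inE => /forallP /(_ y) /implyP. Qed.

Lemma same_level_incomp (x y : T) : x != y -> Level x = Level y -> incomp x y.
Proof.
move=> Hne Hl; rewrite /incomp Hne /=; apply/negP => /comparable_ltgtP [] H.
- by move: (lt_Level H); rewrite Hl ltnn.
- by move: (lt_Level H); rewrite Hl ltnn.
- by rewrite H eqxx in Hne.
Qed.

Lemma full_sub_G (ur : up_regular (T := T)) (S : {set T}) : is_full_trunk S -> S \subset G.
Proof.
move=> [Str [C [[Cc Ccard] CS]]].
apply/subsetP => x xS; rewrite inE; apply/forallP => y; apply/implyP => Hxy.
have [c' c'C Hc'] := max_chain_cover (conj Cc Ccard) (Level_lt_H y).
have Hxc' : (x < c')%O.
  apply: comp_lt; last by rewrite Hc'.
  case: (boolP (x \in C)) => xC; first exact: chain_comp Cc xC c'C.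
  have [c cC Hc] := max_chain_cover (conj Cc Ccard) (Level_lt_H x).
  apply/negPn/negP => Hinc.
  have cx : c != x by apply/eqP => E; rewrite -E cC in xC.
  have xc' : x != c' by apply/eqP => E; rewrite E c'C in xC.
  have cc' : c != c' by apply/eqP => E; move: Hxy; rewrite -Hc' -E Hc ltnn.
  have H1 : incomp c x by apply: same_level_incomp.
  have H2 : incomp x c' by rewrite /incomp xc' Hinc.
  have := Str c x c' (subsetP CS _ cC) xS (subsetP CS _ c'C) cx xc' cc' H1 H2.
  by rewrite /incomp (chain_comp Cc cC c'C) andbF.
by rewrite -(ur x c' y) // Hc'.
Qed.

Lemma G_incomp_level x y : x \in G -> y \in G -> incomp x y -> Level x = Level y.
Proof.
move=> xG yG /andP [_ Hn]; case: (ltngtP (Level x) (Level y)) => // H.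
- by move: Hn; rewrite /Order.comparable (ltW (GP xG H)).
- by move: Hn; rewrite /Order.comparable (ltW (GP yG H)) orbT.
Qed.

Lemma chain_full (C : {set T}) : is_max_chain C -> is_full_trunk C.
Proof.
move=> HC; split; last by exists C.
move=> x y z xC yC _ _ _ _ /andP [_ H]; by rewrite (chain_comp HC.1 xC yC) in H.
Qed.

Lemma G_full (ur : up_regular (T := T)) : is_full_trunk G.
Proof.
split.
  move=> x y z xG yG zG _ _ xz Hxy Hyz; apply: same_level_incomp => //.
  by rewrite (G_incomp_level xG yG Hxy) (G_incomp_level yG zG Hyz).
have [C HC] := max_chain_ex; exists C; split => //.
exact: full_sub_G ur _ (chain_full HC).
Qed.

Lemma notG_gap (ur : up_regular (T := T)) x : x \notin G ->
  (Level x).+1 < Height [set: T] /\ forall w, Level w = (Level x).+1 -> ~~ (x < w)%O.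
Proof.
move=> xG.
have [y Hy] : exists y, ~~ ((Level x < Level y) ==> (x < y)%O).
  apply/existsP; rewrite -negb_forall; by rewrite inE in xG.
move: Hy; rewrite negb_imply => /andP [Hl Hn].
have [z [zy Hz]] := Level_down (leqnn _) Hl.
have Hzn : ~~ (x < z)%O by apply/negP => H; rewrite (lt_le_trans H zy) in Hn.
split; first by rewrite -Hz Level_lt_H.
move=> w Hw; rewrite -(ur x z w) //; by rewrite Hz ?Hw.
Qed.

Lemma chain_notG_bound (ur : up_regular (T := T)) (D : {set T}) :
  D \subset ~: G -> is_chain D -> #|D| * 2 <= Height [set: T].
Proof.
move=> DG Dc.
have nG a : a \in D -> a \notin G by move=> aD; have := subsetP DG a aD; rewrite inE.
have gap a b : a \in D -> b \in D -> (a < b)%O -> (Level a).+2 <= Level b.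
  move=> aD bD ab; have Hl := lt_Level ab.
  case: (eqVneq (Level b) (Level a).+1) => E.
    by move: ((notG_gap ur (nG a aD)).2 b E); rewrite ab.
  by rewrite ltn_neqAle eq_sym E Hl.
set s := map Level (enum D) ++ map (fun a => (Level a).+1) (enum D).
have U : uniq s.
  rewrite cat_uniq; apply/and3P; split.
  - rewrite map_inj_in_uniq ?enum_uniq // => a b aC bC.
    rewrite mem_enum in aC; rewrite mem_enum in bC; exact: chain_Level_inj Dc aC bC.
  - apply/hasPn => n /mapP [b bD ->]; apply/negP => /mapP [a aD].
    rewrite mem_enum in aD; rewrite mem_enum in bD.
    case: (eqVneq a b) => [->|ne]; first by move=> E; lia.
    move: (chain_comp Dc aD bD) => /comparable_ltgtP [] H.
    + have := gap _ _ aD bD H => g E; lia.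
    + have := gap _ _ bD aD H => g E; lia.
    + by rewrite H eqxx in ne.
  - rewrite map_inj_in_uniq ?enum_uniq // => a b aC bC [].
    rewrite mem_enum in aC; rewrite mem_enum in bC; exact: chain_Level_inj Dc aC bC.
have Sub : {subset s <= iota 0 (Height [set: T])}.
  move=> n; rewrite mem_cat => /orP [] /mapP [a aD ->]; rewrite mem_iota add0n.
    exact: Level_lt_H.
  rewrite mem_enum in aD; exact: (notG_gap ur (nG a aD)).1.
have := uniq_leq_size U Sub.
by rewrite size_iota size_cat !size_map -cardE muln2 -addnn.
Qed.

Theorem main (ur : up_regular (T := T)) : exists R : {set T}, is_rel_max_full_trunk R /\
    (Height (~: R) * 2 <= Height [set: T])%N.
Proof.
exists G; split.
  have GM : is_maximal_full_trunk G.
    split; first exact: G_full ur.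
    move=> S HS GS; apply/eqP; rewrite eqEsubset GS andbT; exact: full_sub_G ur S HS.
  split => // S [HS HSm]; symmetry; apply: HSm; first exact: G_full ur.
  exact: full_sub_G ur S HS.
have [|D HD E] := @eq_bigmax_cond _ (fun C : {set T} => (C \subset ~: G) && is_chain C) (fun C => #|C|).
  apply/card_gt0P; exists set0; rewrite unfold_in /= sub0set /=.
  by apply/forallP => a; rewrite in_set0.
have -> : Height (~: G) = #|D| := E.
case/andP: HD => H1 H2; exact: chain_notG_bound ur D H1 H2.
Qed.

End Proofs.

Theorem mainTheorem14 (d : Order.disp_t) (T : finPOrderType d) :
  up_regular (T := T) ->
  exists R : {set T}, is_rel_max_full_trunk R /\
    (Height (~: R) * 2 <= Height [set: T])%N.
Proof. exact: main. Qed.
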